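(* Let $\kappa$ be an infinite cardinal, $\mathcal{U}$ a superfine ultrafilter on $\kappa$, and consider the ring of Euclidean integers $\mathbb{Z}^\kappa/\mathcal{U}$ with $\Sigma(\mathbf{x})=[\mathbf{f}_{\mathbf{x}}]_{\mathcal{U}}$. Let $\eta<\kappa$ and let $(x_{\beta\gamma})_{\beta,\gamma<\kappa}$ be integers with $x_{\beta\gamma}=0$ whenever $\beta\ge2^\eta$ or $\gamma\ge2^\eta$. Define the double sum $\sum_{\beta,\gamma}x_{\beta\gamma}=\sum_\varepsilon w_\varepsilon$ where $w_\varepsilon=\sum_{\beta\vee\gamma=\varepsilon}x_{\beta\gamma}$, and define $\mathbf{y}$ by $y_\alpha=x_{\beta\gamma}$ if $\alpha=2^\eta\beta+\gamma$ with $\beta,\gamma<2^\eta$, and $y_\alpha=0$ otherwise. Then $\sum_{\beta,\gamma}x_{\beta\gamma}=\sum_\alpha y_\alpha$.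
   Context: Every ordinal $\alpha$ has a unique base-2 normal form $\alpha=2^{\alpha_1}+\dots+2^{\alpha_n}$ with $\alpha_1>\dots>\alpha_n$; put $L_\alpha=\{\alpha_1,\dots,\alpha_n\}$. Formal inclusion: $\alpha\sqsubseteq\beta$ iff $L_\alpha\subseteq L_\beta$, $\alpha\sqsubset\beta$ iff $L_\alpha\subsetneq L_\beta$. $\alpha\vee\beta$ is the ordinal $\gamma$ with $L_\gamma=L_\alpha\cup L_\beta$. For $\mathbf{x}\in\mathbb{Z}^\kappa$, $\mathbf{f}_{\mathbf{x}}(\alpha)=\sum_{\beta\sqsubseteq\alpha}x_\beta$, and $[\cdot]_{\mathcal U}$ is the class in the ultrapower $\mathbb{Z}^\kappa/\mathcal U$. For $\theta<\kappa$ the cone is $C(\theta)=\{\alpha<\kappa\mid\theta\sqsubset\alpha\}$. For $\eta<\kappa$, $D(\eta)=\{2^{\eta\cdot2}\alpha+2^\eta\xi+\xi\mid \xi<2^\eta,\ \alpha<\kappa\}$ (ordinal arithmetic). An ultrafilter on $\kappa$ is superfine if it contains $D(\eta)\cap C(\theta)$ for all $\eta,\theta<\kappa$ (in particular it contains all cones). *)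

(* Defs.v *)
From HB Require Import structures.
From mathcomp Require Import all_boot all_order all_algebra.
From mathcomp Require Import boolp classical_sets cardinality fsbigop.
Set Implicit Arguments. Unset Strict Implicit. Unset Printing Implicit Defensive.
Import GRing.Theory Num.Theory.
Local Open Scope classical_set_scope.
Local Open Scope ring_scope.

(* The infinite cardinal kappa is represented by a type K carrying a strict
   well-order R whose order type is kappa: elements of K are the ordinals
   < kappa. *)
Section Ordinals.
Variables (K : choiceType) (R : K -> K -> Prop).

Definition seg (c : K) := {y : K | R y c}.
Definition segR (c : K) (u v : seg c) : Prop := R (proj1_sig u) (proj1_sig v).

Definition order_iso (A B : Type) (ra : A -> A -> Prop) (rb : B -> B -> Prop) :=
  exists f : A -> B, bijective f /\ forall u v, ra u v <-> rb (f u) (f v).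

Definition sumR (A B : Type) (ra : A -> A -> Prop) (rb : B -> B -> Prop)
  (u v : A + B) : Prop :=
  match u, v with
  | inl a1, inl a2 => ra a1 a2
  | inr b1, inr b2 => rb b1 b2
  | inl _, inr _ => True
  | inr _, inl _ => False
  end.

(* ordinal product a * b = b copies of a : ordered by the b-coordinate first *)
Definition prodR (A B : Type) (ra : A -> A -> Prop) (rb : B -> B -> Prop)
  (u v : A * B) : Prop :=
  rb u.2 v.2 \/ (u.2 = v.2 /\ ra u.1 v.1).

(* finite subsets of the segment below a, ordered by the largest element of
   the symmetric difference: this well-order has order type 2^a *)
Definition fin_sub (a : K) := {S : set K | finite_set S /\ S `<=` [set y | R y a]}.
Definition fin_subR (a : K) (S T : fin_sub a) : Prop :=
  exists m, proj1_sig T m /\ ~ proj1_sig S m /\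
    forall z, R m z -> (proj1_sig S z <-> proj1_sig T z).

Definition oadd (a b c : K) := order_iso (@segR c) (sumR (@segR a) (@segR b)).
Definition omul (a b c : K) := order_iso (@segR c) (prodR (@segR a) (@segR b)).
Definition opow2 (a c : K) := order_iso (@segR c) (@fin_subR a).

(* z = 2^{s_1} + (2^{s_2} + ( ... + 0)) with s_1 > s_2 > ... *)
Fixpoint onf (s : seq K) (z : K) : Prop :=
  match s with
  | [::] => forall y, ~ R y z
  | e :: s' => exists q r, opow2 e q /\ onf s' r /\ oadd q r z /\
                 (forall e', e' \in s' -> R e' e)
  end.

Definition L (a : K) : set K := [set e | exists s, onf s a /\ e \in s].

Definition infinite_cardinal : Prop :=
  [/\ (forall a, ~ R a a),
      (forall a b c, R a b -> R b c -> R a c),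
      (forall a b, R a b \/ a = b \/ R b a) &
      well_founded R] /\
  (exists f : nat -> K, injective f) /\
  (forall c, ~ exists f : K -> seg c, injective f).

Definition cone (th : K) : set K := [set a | L th `<=` L a /\ L th <> L a].

(* D(eta) = { 2^(eta*2) alpha + 2^eta xi + xi | xi < 2^eta, alpha < kappa } *)
Definition Dset (eta : K) : set K :=
  [set z | exists (xi a e q p r s t : K),
     [/\ oadd eta eta e, opow2 e q, opow2 eta p & R xi p] /\
     [/\ omul q a r, omul p xi s, oadd r s t & oadd t xi z]].

Definition ultrafilter (U : set (set K)) : Prop :=
  [/\ U setT, ~ U set0,
      (forall A B, A `<=` B -> U A -> U B),
      (forall A B, U A -> U B -> U (A `&` B)) &
      (forall A, U A \/ U (~` A))].

Definition superfine (U : set (set K)) : Prop :=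
  ultrafilter U /\ forall eta th, U (Dset eta `&` cone th).

Definition fsum (x : K -> int) (a : K) : int :=
  \sum_(b \in [set b | L b `<=` L a]) x b.

Definition wjoin (x : K -> K -> int) (e : K) : int :=
  \sum_(q \in [set q : K * K | L e = L q.1 `|` L q.2]) x q.1 q.2.

(* Sigma(x) = Sigma(x') in Z^kappa / U, i.e. [f_x]_U = [f_x']_U *)
Definition ueq (U : set (set K)) (f g : K -> int) : Prop :=
  U [set a | f a = g a].

Definition decomp (eta a b g : K) : Prop :=
  exists p m, [/\ opow2 eta p, R b p, R g p, omul p b m & oadd m g a].

End Ordinals.

(* Main.v *)
Require Import Defs.
From HB Require Import structures.
From mathcomp Require Import all_boot all_order all_algebra.
From mathcomp Require Import boolp classical_sets cardinality fsbigop.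
From mathcomp Require Import zify.
Local Open Scope classical_set_scope.
Set Implicit Arguments. Unset Strict Implicit.

Local Open Scope classical_set_scope.


Lemma sval_inj A (P : A -> Prop) (u v : {x | P x}) : proj1_sig u = proj1_sig v -> u = v.
Proof. case: u => a pa; case: v => b pb /= eab; subst b; congr exist; exact: Prop_irrelevance. Qed.

Definition sto A (r : A -> A -> Prop) :=
  [/\ (forall a, ~ r a a), (forall a b c, r a b -> r b c -> r a c),
      (forall a b, r a b \/ a = b \/ r b a) & well_founded r].

Definition iseg A (r : A -> A -> Prop) (x : A) := {u : A | r u x}.
Definition isegR A (r : A -> A -> Prop) (x : A) (u v : iseg r x) := r (proj1_sig u) (proj1_sig v).

Lemma wf_proj A (P : A -> Prop) (r : A -> A -> Prop) : well_founded r ->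
  well_founded (fun u v : {x | P x} => r (proj1_sig u) (proj1_sig v)).
Proof.
move=> wf u; case: u => a pa.
elim: (wf a) pa => {}a _ IH pa; constructor => -[b pb] /= rba; exact: IH.
Qed.

Lemma sto_iseg A (r : A -> A -> Prop) x : sto r -> sto (@isegR A r x).
Proof.
case=> irr tr tot wf; split.
- by move=> a; apply: irr.
- by move=> a b c; apply: tr.
- move=> a b; case: (tot (proj1_sig a) (proj1_sig b)) => [|[|]]; auto.
  by move=> e; right; left; apply: sval_inj.
- exact: (@wf_proj _ _ _ wf).
Qed.

Lemma incr_not_lt A (r : A -> A -> Prop) (f : A -> A) : well_founded r ->
  (forall u v, r u v -> r (f u) (f v)) -> forall x, ~ r (f x) x.
Proof.
move=> wf mono x; elim: (wf x) => {}x _ IH rfx.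
exact: (IH _ rfx (mono _ _ rfx)).
Qed.

Lemma oiso_refl A (r : A -> A -> Prop) : order_iso r r.
Proof. by exists id; split => //; exists id. Qed.

Lemma oiso_sym A B (ra : A -> A -> Prop) (rb : B -> B -> Prop) :
  order_iso ra rb -> order_iso rb ra.
Proof.
case=> f [[g fK gK] hf]; exists g; split; first by exists f.
by move=> u v; rewrite hf !gK.
Qed.

Lemma oiso_trans A B C (ra : A -> A -> Prop) (rb : B -> B -> Prop) (rc : C -> C -> Prop) :
  order_iso ra rb -> order_iso rb rc -> order_iso ra rc.
Proof.
case=> f [bf hf]; case=> g [bg hg]; exists (g \o f); split; first exact: bij_comp.
by move=> u v; rewrite hf hg.
Qed.

Lemma oiso_mono A B (ra : A -> A -> Prop) (rb : B -> B -> Prop) (f : A -> B) :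
  (forall u v, ra u v \/ u = v \/ ra v u) ->
  (forall b, ~ rb b b) -> (forall b1 b2 b3, rb b1 b2 -> rb b2 b3 -> rb b1 b3) ->
  (forall u v, ra u v -> rb (f u) (f v)) -> (forall b, exists u, f u = b) ->
  order_iso ra rb.
Proof.
move=> tot irr tr mono surj.
have inj : injective f.
  move=> u v fuv; case: (tot u v) => [/mono|[//|/mono]]; rewrite fuv => /irr [].
pose g b := proj1_sig (cid (surj b)).
have gK : cancel g f by move=> b; rewrite /g; case: cid.
exists f; split; first by exists g => // u; apply: inj; rewrite gK.
move=> u v; split; first exact: mono.
move=> h; case: (tot u v) => [//|[e|/mono h']]; first by subst; case: (irr _ h).
by case: (irr _ (tr _ _ _ h h')).
Qed.

Lemma sumR_iso A A' B B' (ra : A -> A -> Prop) (ra' : A' -> A' -> Prop)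
  (rb : B -> B -> Prop) (rb' : B' -> B' -> Prop) :
  order_iso ra ra' -> order_iso rb rb' -> order_iso (sumR ra rb) (sumR ra' rb').
Proof.
case=> f [[f' fK f'K] hf]; case=> g [[g' gK g'K] hg].
exists (fun u => match u with inl a => inl (f a) | inr b => inr (g b) end); split.
  exists (fun u => match u with inl a => inl (f' a) | inr b => inr (g' b) end).
    by case=> [a|b]; rewrite ?fK ?gK.
  by case=> [a|b]; rewrite ?f'K ?g'K.
by case=> [a|b] [a'|b'] /=.
Qed.

Lemma prodR_iso A A' B B' (ra : A -> A -> Prop) (ra' : A' -> A' -> Prop)
  (rb : B -> B -> Prop) (rb' : B' -> B' -> Prop) :
  order_iso ra ra' -> order_iso rb rb' -> order_iso (prodR ra rb) (prodR ra' rb').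
Proof.
case=> f [[f' fK f'K] hf]; case=> g [[g' gK g'K] hg].
exists (fun u => (f u.1, g u.2)); split.
  exists (fun u => (f' u.1, g' u.2)); first by case=> a b /=; rewrite fK gK.
  by case=> a b /=; rewrite f'K g'K.
case=> a b [a' b'] /=; rewrite /prodR /= hf hg; split.
  by case=> [|[-> ?]]; [left|right].
case=> [|[e ?]]; [left|right] => //; split => //.
by rewrite -(gK b) e gK.
Qed.

Lemma iseg_iso_eq A (r : A -> A -> Prop) x y : sto r ->
  order_iso (@isegR A r x) (@isegR A r y) -> x = y.
Proof.
move=> sr; have [irr tr tot wf] := sr.
have key : forall x y, order_iso (@isegR A r x) (@isegR A r y) -> ~ r x y.
  move=> {}x {}y [h [[h' hK h'K] hh]] rxy.
  pose F (v : iseg r y) : iseg r y := exist _ (proj1_sig (h' v)) (tr _ _ _ (proj2_sig (h' v)) rxy).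
  have mono : forall u v, isegR u v -> isegR (F u) (F v).
    by move=> u v huv; rewrite /isegR /F /=; rewrite -[u]h'K -[v]h'K in huv; apply/hh.
  have := @incr_not_lt _ (@isegR A r y) F (@wf_proj _ _ _ wf) mono (exist _ x rxy); apply.
  by rewrite /F /=; apply: (proj2_sig (h' _)).
move=> hxy; case: (tot x y) => [/(key _ _ hxy) []|[//|]].
by move/(key _ _ (oiso_sym hxy)).
Qed.

Lemma iso_restrict A B (ra : A -> A -> Prop) (rb : B -> B -> Prop) x y :
  sto ra -> sto rb ->
  order_iso (@isegR A ra x) (@isegR B rb y) ->
  forall u, ra u x -> exists w, rb w y /\ order_iso (@isegR A ra u) (@isegR B rb w).
Proof.
move=> [irra tra tota wfa] [irrb trb totb wfb] [h [[h' hK h'K] hh]] u ux.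
set U : iseg ra x := exist _ u ux.
exists (proj1_sig (h U)); split; first exact: (proj2_sig (h U)).
pose F (v : iseg ra u) : iseg rb (proj1_sig (h U)) :=
  exist _ (proj1_sig (h (exist _ (proj1_sig v) (tra _ _ _ (proj2_sig v) ux))))
       (iffLR (hh (exist _ _ _) U) (proj2_sig v)).
apply: (@oiso_mono _ _ _ _ F).
- move=> a b; case: (tota (proj1_sig a) (proj1_sig b)) => [|[|]]; auto.
  by move=> e; right; left; apply: sval_inj.
- by move=> b; apply: irrb.
- by move=> b1 b2 b3; apply: trb.
- by move=> a b ab; rewrite /isegR /F /=; apply/(iffLR (hh _ _)).
- move=> [z zw]; have zy := trb _ _ _ zw (proj2_sig (h U)).
  set Z : iseg rb y := exist _ z zy.
  have gz : ra (proj1_sig (h' Z)) u.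
    have : isegR (h (h' Z)) (h U) by rewrite h'K.
    by move/(iffRL (hh _ _)).
  exists (exist (fun t => ra t u) _ gz); apply: sval_inj => /=.
  have -> : exist (fun u0 => ra u0 x) (proj1_sig (h' Z)) (tra _ _ _ gz ux) = h' Z by apply: sval_inj.
  by rewrite h'K.
Qed.

Local Open Scope classical_set_scope.

Section W.
Variables (K : choiceType) (R : K -> K -> Prop).
Hypothesis sR : sto R.

Let irr : forall a, ~ R a a. Proof. by case: sR. Qed.
Let tr : forall a b c, R a b -> R b c -> R a c. Proof. by case: sR. Qed.
Let tot : forall a b, R a b \/ a = b \/ R b a. Proof. by case: sR. Qed.
Let wfR : well_founded R. Proof. by case: sR. Qed.

Definition lex (T S : set K) := exists m, S m /\ ~ T m /\ forall z, R m z -> (T z <-> S z).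
Definition XW := {T : set K | finite_set T}.
Definition lexW (u v : XW) := lex (proj1_sig u) (proj1_sig v).

Lemma lex_irr T : ~ lex T T.
Proof. by case=> m [? [? _]]. Qed.

Lemma lex_trans A B C : lex A B -> lex B C -> lex A C.
Proof.
move=> [m1 [B1 [A1 h1]]] [m2 [C2 [B2 h2]]].
case: (tot m1 m2) => [r12|[e|r21]].
- exists m2; split => //; split; first by rewrite (h1 _ r12).
  by move=> z rz; rewrite (h1 _ (tr r12 rz)) h2.
- by subst.
- exists m1; split; first by rewrite -(h2 _ r21).
  split => // z rz; rewrite h1 // h2 //; exact: tr rz.
Qed.

Lemma finite_max (D : set K) : finite_set D -> D !=set0 ->
  exists m, D m /\ forall z, D z -> z = m \/ R z m.
Proof.
move=> /finite_seqP [s ->]; elim: s => [[z]//|a s IH _].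
case: (pselect ([set` s] !=set0)) => [/IH [m [sm hm]]|s0].
  case: (tot a m) => [am|[e|ma]].
  - exists m; split; first by rewrite /= inE sm orbT.
    by move=> z; rewrite /= inE => /orP[/eqP->|/hm]; auto.
  - subst; exists m; split; first by rewrite /= inE eqxx.
    by move=> z; rewrite /= inE => /orP[/eqP->|/hm]; auto.
  - exists a; split; first by rewrite /= inE eqxx.
    move=> z; rewrite /= inE => /orP[/eqP->|/hm [->|zm]]; auto.
    by right; apply: tr ma.
exists a; split; first by rewrite /= inE eqxx.
move=> z; rewrite /= inE => /orP[/eqP->|zs]; auto.
by case: s0; exists z.
Qed.

Lemma lex_tot T S : finite_set T -> finite_set S -> lex T S \/ T = S \/ lex S T.
Proof.
move=> fT fS; set D := (T `\` S) `|` (S `\` T).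
have fD : finite_set D by rewrite /D finite_setU; split; apply: finite_setD.
case: (pselect (D !=set0)) => [D0|D0]; last first.
  right; left; apply/seteqP; split => z zz; apply: contrapT => nz; apply: D0; exists z;
  by [left|right].
have [m [Dm hm]] := finite_max fD D0.
have agree : forall z, R m z -> (T z <-> S z).
  move=> z mz.
  have nD : ~ D z by move=> /hm [e|zm]; [subst; exact: irr mz| exact: irr (tr mz zm)].
  split => hz; apply: contrapT => nz; apply: nD; by [left|right].
case: Dm => [[Tm Sm]|[Sm Tm]].
  right; right; exists m; split => //; split => // z /agree; tauto.
by left; exists m.
Qed.

Lemma lex_bound T G c : lex T G -> (forall g, G g -> R g c) -> forall t, T t -> R t c.
Proof.
move=> [m [Gm [Tm h]]] hG t Tt.
case: (tot t m) => [tm|[e|mt]]; first exact: tr tm (hG _ Gm).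
  by subst.
by apply: hG; rewrite -h.
Qed.

Lemma lex_boundle T G c : lex T G -> (forall g, G g -> g = c \/ R g c) -> forall t, T t -> t = c \/ R t c.
Proof.
move=> [m [Gm [Tm h]]] hG t Tt.
case: (tot t m) => [tm|[e|mt]]; last by apply: hG; rewrite -h.
  by right; case: (hG _ Gm) => [<-//|mc]; exact: tr tm mc.
by subst.
Qed.

Lemma lex0 T : ~ lex T set0.
Proof. by case=> m []. Qed.

Lemma lex1 T e : finite_set T -> (lex T [set e] <-> (forall t, T t -> R t e)).
Proof.
move=> fT; split.
  move=> h t Tt; have := lex_boundle h (fun g (eg : [set e] g) => or_introl eg) Tt.
  case=> // te; subst t; case: h => m [em [Tm _]]; by rewrite em in Tm.
move=> h; exists e; split => //; split; first by move/h/irr.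
move=> z ez; split; first by move/h => ze; case: (irr (tr ez ze)).
by move=> ze; rewrite ze in ez; case: (irr ez).
Qed.

Lemma sub_lex T S : finite_set S -> T `<=` S -> T <> S -> lex T S.
Proof.
move=> fS TS nTS.
have fT : finite_set T := sub_finite_set TS fS.
case: (lex_tot fT fS) => [//|[//|[m [Tm [Sm _]]]]].
by case: Sm; apply: TS.
Qed.

Lemma acc_empty (u : XW) : proj1_sig u = set0 -> Acc lexW u.
Proof. by move=> e; constructor => v; rewrite /lexW e => /lex0. Qed.

Lemma lexW_wf : well_founded lexW.
Proof.
have Q : forall m (u : XW), (forall t, proj1_sig u t -> t = m \/ R t m) -> Acc lexW u.
  elim/(well_founded_ind wfR) => m IH.
  have case1 : forall u : XW, (forall t, proj1_sig u t -> R t m) -> Acc lexW u.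
    move=> u hu; case: (pselect (proj1_sig u !=set0)) => [u0|u0]; last first.
      by apply: acc_empty; apply/seteqP; split => // z uz; apply: u0; exists z.
    have [t0 [ut0 ht0]] := finite_max (proj2_sig u) u0.
    exact: (IH t0 (hu _ ut0)).
  have step : forall v : XW, Acc lexW v -> (forall t, proj1_sig v t -> R t m) ->
      forall u : XW, proj1_sig u = proj1_sig v `|` [set m] -> Acc lexW u.
    move=> v; elim => {}v _ IHv hv u eu; constructor => w.
    rewrite /lexW eu => lwu.
    have wle : forall t, proj1_sig w t -> t = m \/ R t m.
      apply: (lex_boundle lwu) => g [/hv|->]; auto.
    case: (pselect (proj1_sig w m)) => wm; last first.
      apply: case1 => t wt; case: (wle _ wt) => // e; by subst.
    have fw' : finite_set (proj1_sig w `\` [set m]) := finite_setD _ (proj2_sig w).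
    set w' : XW := exist _ _ fw'.
    have lw : lexW w' v.
      case: lwu => d [Td [wd h]].
      have dm : d <> m by move=> e; subst.
      have vd : proj1_sig v d by case: Td.
      exists d; split => //; split; first by case.
      move=> z dz; rewrite /w' /=; split.
        by case=> /(h _ dz) [//|->] /=; move=> zm; case: zm.
      move=> vz; split; first by apply/(h _ dz); left.
      by move=> /= e; subst; case: (irr (hv _ vz)).
    apply: (IHv w' lw); first by move=> t [/wle [->|//] /=].
    rewrite /w' /=; apply/seteqP; split; first by move=> z wz; case: (pselect (z = m)); [right|left].
    by move=> z [[]//|->].
  move=> u hu; case: (pselect (proj1_sig u m)) => um; last first.
    apply: case1 => t ut; case: (hu _ ut) => // e; by subst.
  have fv : finite_set (proj1_sig u `\` [set m]) := finite_setD _ (proj2_sig u).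
  set v : XW := exist _ _ fv.
  have hv : forall t, proj1_sig v t -> R t m by move=> t [ut ntm]; case: (hu _ ut) => // e; subst.
  apply: (step v (case1 v hv) hv).
  apply/seteqP; split; first by move=> z uz; case: (pselect (z = m)); [right|left].
  by move=> z [[]//|->].
move=> u; case: (pselect (proj1_sig u !=set0)) => [u0|u0]; last first.
  by apply: acc_empty; apply/seteqP; split => // z uz; apply: u0; exists z.
have [t0 [ut0 ht0]] := finite_max (proj2_sig u) u0.
exact: (Q t0).
Qed.

Lemma sto_lexW : sto lexW.
Proof.
split.
- by move=> a; apply: lex_irr.
- by move=> a b c; apply: lex_trans.
- move=> a b; case: (lex_tot (proj2_sig a) (proj2_sig b)) => [|[|]]; auto.
  by move=> e; right; left; apply: sval_inj.
- exact: lexW_wf.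
Qed.

End W.

Local Open Scope classical_set_scope.

Lemma sumR_tot A B (ra : A -> A -> Prop) (rb : B -> B -> Prop) :
  (forall u v, ra u v \/ u = v \/ ra v u) -> (forall u v, rb u v \/ u = v \/ rb v u) ->
  forall u v, sumR ra rb u v \/ u = v \/ sumR ra rb v u.
Proof.
move=> ta tb [a|b] [a'|b'] /=; auto.
- by case: (ta a a') => [|[->|]]; auto.
- by case: (tb b b') => [|[->|]]; auto.
Qed.

Lemma prodR_tot A B (ra : A -> A -> Prop) (rb : B -> B -> Prop) :
  (forall u v, ra u v \/ u = v \/ ra v u) -> (forall u v, rb u v \/ u = v \/ rb v u) ->
  forall u v, prodR ra rb u v \/ u = v \/ prodR ra rb v u.
Proof.
move=> ta tb [a b] [a' b']; rewrite /prodR /=.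
case: (tb b b') => [|[e|]]; auto; subst.
case: (ta a a') => [|[e|]]; [left|right;left|right;right]; subst; auto.
Qed.

Lemma wf_min A (r : A -> A -> Prop) (P : A -> Prop) : well_founded r ->
  (exists x, P x) -> exists x, P x /\ forall y, r y x -> ~ P y.
Proof.
move=> wf [x px]; elim: (wf x) px => {}x _ IH px.
case: (pselect (exists y, r y x /\ P y)) => [[y [ryx py]]|h]; first exact: IH ryx py.
by exists x; split => // y ryx py; apply: h; exists y.
Qed.

Section Phi.
Variables (K : choiceType) (R : K -> K -> Prop).
Hypothesis sR : sto R.
Hypothesis hcard : forall c, ~ exists f : K -> seg R c, injective f.

Let irr : forall a, ~ R a a. Proof. by case: sR. Qed.
Let tr : forall a b c, R a b -> R b c -> R a c. Proof. by case: sR. Qed.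
Let tot : forall a b, R a b \/ a = b \/ R b a. Proof. by case: sR. Qed.
Let wfR : well_founded R. Proof. by case: sR. Qed.
Let sW := sto_lexW sR.

Notation XW := (XW K).
Notation lexW := (lexW R).
Notation Wlt S := (@isegR XW lexW S).
Notation Seg z := (@isegR K R z).

Lemma finU (A B : set K) : finite_set A -> finite_set B -> finite_set (A `|` B).
Proof. by move=> ? ?; rewrite finite_setU. Qed.
Definition Wun (a b : XW) : XW :=
  exist _ (proj1_sig a `|` proj1_sig b) (finU (proj2_sig a) (proj2_sig b)).
Definition W1 (e : K) : XW := exist _ [set e] (finite_set1 e).
Definition W0 : XW := exist _ set0 (finite_set0 K).

Lemma sumW (S G SG : XW) : (forall g s, proj1_sig G g -> proj1_sig S s -> R g s) ->
  proj1_sig SG = proj1_sig S `|` proj1_sig G ->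
  order_iso (sumR (Wlt S) (Wlt G)) (Wlt SG).
Proof.
move=> hGS eSG.
have D1 : forall T : set K, lex R T (proj1_sig S) -> lex R T (proj1_sig SG).
  move=> T [m [Sm [Tm h]]]; exists m; rewrite eSG; split; first by left.
  split => // z mz; rewrite h //; split; first by left.
  by case=> // Gz; case: (irr (tr mz (hGS _ _ Gz Sm))).
have below : forall T : set K, lex R T (proj1_sig G) -> forall t s, T t -> proj1_sig S s -> R t s.
  move=> T lTG t s Tt Ss; apply: (lex_bound sR lTG) Tt => g Gg; exact: hGS.
have D2 : forall T T' : set K, (forall t s, T' t -> proj1_sig S s -> R t s) -> lex R T T' ->
    lex R (proj1_sig S `|` T) (proj1_sig S `|` T').
  move=> T T' lT'G [m [T'm [Tm h]]]; exists m; split; first by right.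
  have nSm : ~ proj1_sig S m by move=> Sm; case: (irr (lT'G _ _ T'm Sm)).
  split; first by case.
  move=> z mz; split; case=> [Sz|]; try by left.
    by move/(h _ mz); right.
  by move/(h _ mz); right.
have D3 : forall T T' : set K, lex R T' (proj1_sig G) -> lex R T (proj1_sig S) ->
    lex R T (proj1_sig S `|` T').
  move=> T T' lT'G [m [Sm [Tm h]]]; exists m; split; first by left.
  split => // z mz; rewrite h //; split; first by left.
  by case=> // T'z; case: (irr (tr mz (below _ lT'G _ _ T'z Sm))).
pose f (u : iseg lexW S + iseg lexW G) : iseg lexW SG :=
  match u with
  | inl T => exist _ (proj1_sig T) (D1 _ (proj2_sig T))
  | inr T => exist _ (Wun S (proj1_sig T))
         (eq_ind_r (fun X => lex R _ X) (D2 _ _ hGS (proj2_sig T)) eSG)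
  end.
have [irrS trS totS _] := sto_iseg S sW.
have [irrG trG totG _] := sto_iseg G sW.
have [irrSG trSG _ _] := sto_iseg SG sW.
apply: (@oiso_mono _ _ _ _ f).
- exact: sumR_tot.
- exact: irrSG.
- exact: trSG.
- case=> T [T'|T'] //=.
  + move=> _; rewrite /isegR /lexW /=; apply: D3; [exact: (proj2_sig T')|exact: (proj2_sig T)].
  + move=> lTT'; rewrite /isegR /lexW /=.
    exact: (D2 _ _ (fun t s => below _ (proj2_sig T') t s) lTT').
- case=> V lV; have [m [SGm [Vm h]]] : lex R (proj1_sig V) (proj1_sig S `|` proj1_sig G) by rewrite -eSG.
  case: (pselect (proj1_sig S m)) => Sm.
    have lVS : lexW V S.
      exists m; split => //; split => // z mz; rewrite h //; split; last by left.
      by case=> // Gz; case: (irr (tr mz (hGS _ _ Gz Sm))).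
    by exists (inl (exist _ V lVS)); apply: sval_inj.
  have Gm : proj1_sig G m by case: SGm.
  have fT : finite_set (proj1_sig V `\` proj1_sig S) := finite_setD _ (proj2_sig V).
  pose T : XW := exist _ _ fT.
  have lTG : lexW T G.
    exists m; split => //; split; first by case.
    move=> z mz; rewrite /T /=; split.
      by case=> /(h _ mz) [].
    move=> Gz; split; first by apply/(h _ mz); right.
    by move=> Sz; case: (irr (hGS _ _ Gz Sz)).
  exists (inr (exist _ T lTG)); apply: sval_inj; apply: sval_inj => /=.
  apply/seteqP; split; last first.
    move=> z Vz; case: (pselect (proj1_sig S z)) => Sz; [by left|by right].
  move=> z [Sz|[]//]; apply/(h _ (hGS _ _ Gm Sz)); by left.
Qed.

Lemma finsub_iso e : order_iso (@fin_subR K R e) (Wlt (W1 e)).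
Proof.
have hl : forall T : fin_sub R e, lexW (exist _ (proj1_sig T) (proj1 (proj2_sig T))) (W1 e).
  move=> [T [fT sT]]; rewrite /lexW /=; apply/(lex1 sR) => //.
pose f (T : fin_sub R e) : iseg lexW (W1 e) := exist (fun u => lexW u (W1 e)) _ (hl T).
have [irrW trW _ _] := sto_iseg (W1 e) sW.
apply: (@oiso_mono _ _ _ _ f) => //.
- move=> [a [fa sa]] [b [fb sb]]; case: (lex_tot sR fa fb) => [|[e'|]]; auto.
  by subst; right; left; apply: sval_inj.
- move=> [[T fT] lT]; have sT : T `<=` (fun y => R y e).
    by move: lT; rewrite /lexW /= (lex1 sR _ fT).
  exists (exist _ T (conj fT sT)); apply: sval_inj; exact: sval_inj.
Qed.

Lemma Wlt0 (T : XW) : ~ lexW T W0.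
Proof. exact: lex0. Qed.

Lemma phi_ex z : exists S : XW, order_iso (Seg z) (Wlt S).
Proof.
elim/(well_founded_ind wfR): z => z IH.
have U1 : forall y (S S' : XW), order_iso (Seg y) (Wlt S) -> order_iso (Seg y) (Wlt S') -> S = S'.
  move=> y S S' h h'; apply: (iseg_iso_eq sW); exact: oiso_trans (oiso_sym h) h'.
pose g (y : iseg R z) : XW := proj1_sig (cid (IH _ (proj2_sig y))).
have gP : forall y, order_iso (Seg (proj1_sig y)) (Wlt (g y)).
  by move=> y; rewrite /g; case: cid.
have mono : forall y y', isegR y y' -> lexW (g y) (g y').
  move=> y y' yy'; have [w [lw hw]] := iso_restrict sR sW (gP y') yy'.
  by rewrite (U1 _ _ _ (gP y) hw).
have down : forall y' (T : XW), lexW T (g y') -> exists y, g y = T.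
  move=> y' T lT; have [w [lw hw]] := iso_restrict sW sR (oiso_sym (gP y')) lT.
  have wz : R w z := tr lw (proj2_sig y').
  exists (exist (fun t => R t z) w wz); exact: (U1 w _ _ (gP (exist (fun t => R t z) w wz)) (oiso_sym hw)).
have notall : exists T : XW, forall y, g y <> T.
  apply: contrapT => hall.
  have hy : forall k : K, exists y, g y = W1 k.
    move=> k; apply: contrapT => nk; apply: hall; exists (W1 k) => y gy; apply: nk; by exists y.
  apply: (@hcard z); exists (fun k => proj1_sig (cid (hy k))).
  move=> k k' e; have := f_equal g e; case: cid => y1 /= ->; case: cid => y2 /= ->.
  move/(f_equal (@proj1_sig _ _)) => /= e1.
  by have : [set k] k by []; rewrite e1.
have [S [hS minS]] := wf_min (lexW_wf sR) notall.
have glt : forall y, lexW (g y) S.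
  move=> y; case: (lex_tot sR (proj2_sig (g y)) (proj2_sig S)) => [//|[e|lSg]].
    by case: (hS y); apply: sval_inj.
  by have [y2 e2] := down _ _ lSg; case: (hS y2).
pose F (y : iseg R z) : iseg lexW S := exist (fun u => lexW u S) (g y) (glt y).
exists S; apply: (@oiso_mono _ _ _ _ F).
- by case: (sto_iseg z sR).
- by case: (sto_iseg S sW).
- by case: (sto_iseg S sW).
- by move=> y y' /mono.
- move=> [T lT]; have : exists y, g y = T.
    by apply: contrapT => nT; apply: (minS _ lT) => y gy; apply: nT; exists y.
  by case=> y gy; exists y; apply: sval_inj.
Qed.

Lemma phi_uniq z (S S' : XW) : order_iso (Seg z) (Wlt S) -> order_iso (Seg z) (Wlt S') -> S = S'.
Proof. by move=> h h'; apply: (iseg_iso_eq sW); exact: oiso_trans (oiso_sym h) h'. Qed.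

Lemma seg_uniq z z' : order_iso (Seg z) (Seg z') -> z = z'.
Proof. exact: iseg_iso_eq. Qed.

Lemma phi_down z (S T : XW) : order_iso (Seg z) (Wlt S) -> lexW T S ->
  exists y, R y z /\ order_iso (Seg y) (Wlt T).
Proof.
move=> h lT; have [w [lw hw]] := iso_restrict sW sR (oiso_sym h) lT.
by exists w; split => //; apply: oiso_sym.
Qed.

Lemma phi_restr z (S : XW) y : order_iso (Seg z) (Wlt S) -> R y z ->
  exists T, lexW T S /\ order_iso (Seg y) (Wlt T).
Proof. by move=> h yz; have [w [lw hw]] := iso_restrict sR sW h yz; exists w. Qed.

End Phi.

Local Open Scope classical_set_scope.

Section Onf.
Variables (K : choiceType) (R : K -> K -> Prop).
Hypothesis sR : sto R.
Hypothesis hcard : forall c, ~ exists f : K -> seg R c, injective f.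

Let irr : forall a, ~ R a a. Proof. by case: sR. Qed.
Let tr : forall a b c, R a b -> R b c -> R a c. Proof. by case: sR. Qed.
Let tot : forall a b, R a b \/ a = b \/ R b a. Proof. by case: sR. Qed.
Let wfR : well_founded R. Proof. by case: sR. Qed.
Let sW := sto_lexW sR.

Notation XW := (XW K).
Notation lexW := (lexW R).
Notation Wlt S := (@isegR XW lexW S).
Notation Seg z := (@isegR K R z).

Lemma empty_iso z : (forall y, ~ R y z) -> order_iso (Seg z) (Wlt (W0 K)).
Proof.
move=> hz; pose f (y : iseg R z) : iseg lexW (W0 K) := False_rect _ (hz _ (proj2_sig y)).
have [irrW trW _ _] := sto_iseg (W0 K) sW.
apply: (@oiso_mono _ _ _ _ f) => //.
- by move=> [u hu]; case: (hz _ hu).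
- by move=> [u hu]; case: (hz _ hu).
- by move=> [T hT]; case: (lex0 hT).
Qed.

Lemma onf_iso s z : onf R s z -> exists S : XW, proj1_sig S = [set` s] /\ order_iso (Seg z) (Wlt S).
Proof.
elim: s z => [|e s IH] z /=.
  move=> hz; exists (W0 K); split; first by apply/seteqP; split => x //=.
  exact: empty_iso.
move=> [q [r [hq [hr [hqrz hs]]]]].
have [S' [eS' hS']] := IH _ hr.
have hq' : order_iso (Seg q) (Wlt (W1 e)) := oiso_trans hq (finsub_iso sR e).
have h1 : order_iso (Seg z) (sumR (Wlt (W1 e)) (Wlt S')).
  exact: oiso_trans hqrz (sumR_iso hq' hS').
exists (Wun (W1 e) S'); split.
  rewrite /Wun /= eS'; apply/seteqP; split => x /=; rewrite inE.
    by case=> [->|xs]; rewrite ?eqxx // xs orbT.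
  by case/orP=> [/eqP->|xs]; [left|right].
apply: oiso_trans h1 (sumW sR _ _) => //.
by move=> g s0; rewrite eS' /= => gs ->; apply: hs.
Qed.

Lemma onf_ex n : forall (l : seq K) (S : XW) z, size l <= n -> proj1_sig S = [set` l] ->
  order_iso (Seg z) (Wlt S) -> exists s, onf R s z /\ [set` s] = proj1_sig S.
Proof.
elim: n => [|n IH] l S z hl eS hz.
  move: hl; rewrite leqn0 => /nilP el; subst l.
  exists [::]; split; last by rewrite eS.
  move=> y yz; case: hz => f [_ _].
  by case: (f (exist _ y yz)) => T; rewrite /lexW eS; case=> m [].
case: (pselect (proj1_sig S !=set0)) => [S0|S0].
  have [e [Se he]] := finite_max sR (proj2_sig S) S0.
  have fS' : finite_set (proj1_sig S `\` [set e]) := finite_setD _ (proj2_sig S).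
  pose S' : XW := exist _ _ fS'.
  have hS'e : forall g s, proj1_sig S' g -> proj1_sig (W1 e) s -> R g s.
    by move=> g s [Sg ng] ->; case: (he _ Sg).
  have eSU : proj1_sig S = proj1_sig (W1 e) `|` proj1_sig S'.
    apply/seteqP; split => x /=; last by case=> [->|[]].
    by move=> Sx; case: (pselect (x = e)); [left|right].
  have hsum := sumW sR hS'e eSU.
  have lS'S : lexW S' S.
    apply: (sub_lex sR (proj2_sig S)); first by move=> x [].
    move=> e1; have : proj1_sig S' e by rewrite e1.
    by case=> _; apply.
  have [r [rz hr]] := phi_down sR hz lS'S.
  have [q hq] : exists q, order_iso (Seg q) (Wlt (W1 e)) /\ (q = z \/ R q z).
    case: (pselect (proj1_sig S' !=set0)) => [S'0|S'0].
      have l1 : lexW (W1 e) S.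
        apply: (sub_lex sR (proj2_sig S)); first by move=> x /= ->.
        move=> e1; case: S'0 => x [Sx nx]; have : proj1_sig (W1 e) x by rewrite e1.
        by move=> /= xe; apply: nx.
      by have [q [qz hq]] := phi_down sR hz l1; exists q; split => //; right.
    exists z; split; last by left.
    have -> : W1 e = S; last by [].
    apply: sval_inj => /=; rewrite eSU; apply/seteqP; split => x; first by left.
    by case=> // x'; case: S'0; exists x.
  case: hq => hq _.
  have [s' [hs' es']] : exists s', onf R s' r /\ [set` s'] = proj1_sig S'.
    apply: (IH (filter (predC1 e) l)) hr.
      have : e \in l by have : proj1_sig S e := Se; rewrite eS.
      move=> el; rewrite -ltnS (leq_trans _ hl) //.
      have c0 : (0 < count (pred1 e) l)%N.
        by rewrite -has_count; apply/hasP; exists e => //=.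
      have := count_predC (pred1 e) l; rewrite size_filter.
      rewrite (@eq_count _ (predC1 e) (predC (pred1 e))) // => hc.
      by rewrite -hc -{1}(add0n (count _ l)) ltn_add2r.
    rewrite /S' /= eS; apply/seteqP; split => x /=; rewrite mem_filter /=; last by case/andP => /eqP.
      by case=> Sx nx; apply/andP; split; [apply/eqP|].
  exists (e :: s'); split.
    exists q, r; split; first exact: (oiso_trans hq (oiso_sym (finsub_iso sR e))).
    split; first exact: hs'.
    split.
      exact: oiso_trans hz (oiso_trans (oiso_sym hsum) (sumR_iso (oiso_sym hq) (oiso_sym hr))).
    move=> e' e's; have : [set` s'] e' by []; rewrite es' => -[Se' ne'].
    by case: (he _ Se').
  have ms : forall x, x \in s' <-> (proj1_sig S `\` [set e]) x.
    by move=> x; change ([set` s'] x <-> proj1_sig S' x); rewrite es'.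
  rewrite eSU; apply/seteqP; split => x /=; rewrite inE.
    by case/orP=> [/eqP->|/ms xs]; [left|right].
  by case=> [->|/ms xs]; rewrite ?eqxx ?xs ?orbT.
exists [::]; split; last by apply/seteqP; split => x //= Sx; case: S0; exists x.
move=> y yz; case: hz => f _; case: (f (exist _ y yz)) => T [m [Sm _]].
by case: S0; exists m.
Qed.

Lemma L_iso z (S : XW) : order_iso (Seg z) (Wlt S) -> L R z = proj1_sig S.
Proof.
move=> hz; apply/seteqP; split.
  move=> e [s [hs es]]; have [S'' [eS'' h'']] := onf_iso hs.
  by rewrite -(phi_uniq sR h'' hz) eS''.
move=> e Se; have /finite_seqP [l el] := proj2_sig S.
have [s [hs es]] := onf_ex (leqnn (size l)) el hz.
by exists s; split => //; have : [set` s] e by rewrite es.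
Qed.

Definition LW z : XW := proj1_sig (cid (phi_ex sR hcard z)).
Lemma LW_iso z : order_iso (Seg z) (Wlt (LW z)).
Proof. by rewrite /LW; case: cid. Qed.
Lemma LW_L z : proj1_sig (LW z) = L R z.
Proof. by rewrite (L_iso (LW_iso z)). Qed.
Lemma L_fin z : finite_set (L R z).
Proof. rewrite -LW_L; exact: proj2_sig. Qed.
Lemma LW_inj z z' : LW z = LW z' -> z = z'.
Proof.
move=> e; apply: (seg_uniq sR); apply: oiso_trans (LW_iso z) _.
by rewrite e; apply: oiso_sym; apply: LW_iso.
Qed.
Lemma L_inj z z' : L R z = L R z' -> z = z'.
Proof. by rewrite -!LW_L => e; apply: LW_inj; apply: sval_inj. Qed.
Lemma iso_LW z (S : XW) : order_iso (Seg z) (Wlt S) -> S = LW z.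
Proof. move=> h; exact: (phi_uniq sR h (LW_iso z)). Qed.
End Onf.

Local Open Scope classical_set_scope.

Section Mult.
Variables (K : choiceType) (R : K -> K -> Prop).
Hypothesis sR : sto R.
Variable e : K.

Let irr : forall a, ~ R a a. Proof. by case: sR. Qed.
Let tr : forall a b c, R a b -> R b c -> R a c. Proof. by case: sR. Qed.
Let tot : forall a b, R a b \/ a = b \/ R b a. Proof. by case: sR. Qed.
Let wfR : well_founded R. Proof. by case: sR. Qed.
Let sW := sto_lexW sR.

Notation XW := (XW K).
Notation lexW := (lexW R).
Notation Wlt S := (@isegR XW lexW S).
Notation Seg z := (@isegR K R z).

Lemma hi_lo c d : ~ R c e -> R d e -> R d c.
Proof.
move=> nc de; case: (tot d c) => [//|[ed|cd]]; first by subst.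
by case: nc; apply: tr de.
Qed.

Lemma HL (U S : set K) : lex R U S -> ~ lex R U (fun z => S z /\ ~ R z e) ->
  (forall z, ~ R z e -> (U z <-> S z)) /\
  lex R (fun z => U z /\ R z e) (fun z => S z /\ R z e).
Proof.
move=> [d [Sd [Ud h]]] nl.
case: (pselect (R d e)) => de; last first.
  case: nl; exists d; split => //; split => // z dz; rewrite h //; split.
    by move=> Sz; split => // ze; case: de; apply: tr dz ze.
  by case.
split.
  move=> z nz; apply: h; exact: hi_lo.
exists d; split => //; split; first by case.
move=> z dz; split; case=> Pz ze; split => //; by apply/(h _ dz).
Qed.

Lemma lexU_lo (T X X' : set K) : (forall z, T z -> ~ R z e) -> (forall z, X' z -> R z e) ->
  lex R X X' -> lex R (T `|` X) (T `|` X').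
Proof.
move=> hT hX' [m [X'm [Xm h]]]; exists m; split; first by right.
have me := hX' _ X'm.
split; first by case=> // /hT.
move=> z mz; split; case=> [Tz|/(h _ mz) ?]; by [left|right].
Qed.

Lemma lexU_hi (T0 Sh X : set K) : (forall z, X z -> R z e) ->
  (exists d, Sh d /\ ~ T0 d /\ ~ R d e /\ forall z, R d z -> (T0 z <-> Sh z)) ->
  lex R (T0 `|` X) Sh.
Proof.
move=> hX [d [Shd [T0d [de h]]]]; exists d; split => //; split.
  by case=> // /hX.
move=> z dz; rewrite -h //; split; last by left.
case=> // /hX ze; case: de; apply: tr dz ze.
Qed.

Lemma mult a' (S : XW) : order_iso (prodR (Wlt (W1 e)) (Seg a')) (Wlt S) ->
  forall c, proj1_sig S c -> ~ R c e.
Proof.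
elim/(well_founded_ind wfR): a' S => a' IH S [F [[F' FK F'K] hF]].
have [irrP trP totP wfP] := sto_iseg (W1 e) sW.
have [irrA trA totA wfA] := sto_iseg a' sR.
have [irrS trS totS wfS] := sto_iseg S sW.
have hbot : lexW (W0 K) (W1 e) by apply/(lex1 sR e (finite_set0 K)).
pose bot : iseg lexW (W1 e) := exist (fun u => lexW u (W1 e)) (W0 K) hbot.
have botmin : forall x : iseg lexW (W1 e), ~ isegR x bot by move=> x; apply: lex0.
have botle : forall x : iseg lexW (W1 e), x = bot \/ isegR bot x.
  by move=> x; case: (totP x bot) => [/botmin[]|[]]; auto.
have Plo : forall (x : iseg lexW (W1 e)) z, proj1_sig (proj1_sig x) z -> R z e.
  by move=> [[X fX] lX] z /=; move: lX; rewrite /lexW /= (lex1 sR _ fX); apply.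
have restr : forall a3 : iseg R a',
    order_iso (prodR (Wlt (W1 e)) (Seg (proj1_sig a3))) (Wlt (proj1_sig (F (bot, a3)))).
  move=> a3.
  pose up (p : iseg lexW (W1 e) * iseg R (proj1_sig a3)) : iseg lexW (W1 e) * iseg R a' :=
    (p.1, exist (fun t => R t a') (proj1_sig p.2) (tr (proj2_sig p.2) (proj2_sig a3))).
  have upl : forall p, isegR (F (up p)) (F (bot, a3)).
    by move=> p; apply/hF; left; exact: (proj2_sig p.2).
  pose G p : iseg lexW (proj1_sig (F (bot, a3))) :=
    exist (fun u => lexW u (proj1_sig (F (bot, a3)))) _ (upl p).
  have [irrT trT _ _] := sto_iseg (proj1_sig (F (bot, a3))) sW.
  apply: (@oiso_mono _ _ _ _ G) => //.
  - apply: prodR_tot => // u v; case: (sto_iseg (proj1_sig a3) sR) => _ _ t _; exact: t.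
  - move=> p p' pp'; rewrite /isegR /G /=; apply/(hF (up p) (up p')).
    by case: pp' => [|[e1 h1]]; [left|right; split => //; rewrite /up /= e1].
  - move=> [v lv]; have lvS := lex_trans sR lv (proj2_sig (F (bot, a3))).
    set Vb : iseg lexW S := exist (fun u => lexW u S) v lvS.
    have : prodR (Wlt (W1 e)) (Seg a') (F' Vb) (bot, a3).
      apply/(hF (F' Vb) (bot, a3)); rewrite F'K; exact: lv.
    case=> [h4|[_ /botmin []]].
    exists ((F' Vb).1, exist (fun t => R t (proj1_sig a3)) _ h4).
    apply: sval_inj => /=; rewrite /up /=.
    have -> : ((F' Vb).1, exist (fun t => R t a') (proj1_sig (F' Vb).2)
          (tr h4 (proj2_sig a3))) = F' Vb.
      by case: (F' Vb) h4 => p1 p2 h4 /=; congr pair; apply: sval_inj.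
    by rewrite F'K.
move=> c Sc ce.
set Shi := fun z => proj1_sig S z /\ ~ R z e.
set Slo := fun z => proj1_sig S z /\ R z e.
have fShi : finite_set Shi by apply: sub_finite_set (proj2_sig S) => z [].
have fSlo : finite_set Slo by apply: sub_finite_set (proj2_sig S) => z [].
pose WShi : XW := exist _ Shi fShi.
have hShiS : lexW WShi S.
  have [m0 [[Sm0 m0e] hm0]] := finite_max sR fSlo (ex_intro _ c (conj Sc ce)).
  exists m0; split => //; split; first by case.
  move=> z m0z; split; first by case.
  move=> Sz; split => // ze; case: (hm0 _ (conj Sz ze)) => [zm|zm].
    by subst; case: (irr m0z).
  by case: (irr (tr m0z zm)).
set xa := F' (exist (fun u => lexW u S) WShi hShiS).
have FxaShi : proj1_sig (F xa) = WShi by rewrite /xa F'K.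
case: (pselect (exists a'' : iseg R a', isegR xa.2 a'')) => [[a'' aa'']|na].
  set T := proj1_sig (F (bot, a'')).
  have hT := IH _ (proj2_sig a'') T (restr a'').
  have l1 : lexW WShi T.
    rewrite -FxaShi; apply/(hF xa (bot, a'')); by left.
  have l2 : lexW T S := proj2_sig (F (bot, a'')).
  have [h1 _] := HL l2 (fun l3 => lex_irr (lex_trans sR l1 l3)).
  have eT : proj1_sig T = Shi.
    apply/seteqP; split => z.
      by move=> Tz; have zh := hT _ Tz; split => //; apply/h1.
    by case=> Sz zh; apply/h1.
  by move: l1; rewrite /lexW eT; apply: lex_irr.
set a := xa.2.
have hlast : forall a3 : iseg R a', a3 = a \/ isegR a3 a.
  move=> a3; case: (totA a3 a) => [|[]]; auto => h; case: na; by exists a3.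
set T0 := proj1_sig (F (bot, a)).
have hT0 := IH _ (proj2_sig a) T0 (restr a).
have Fmono : forall u v, prodR (Wlt (W1 e)) (Seg a') u v -> lexW (proj1_sig (F u)) (proj1_sig (F v)).
  by move=> u v /hF.
have xaE : xa = (xa.1, a) by exact: surjective_pairing.
have eT0 : T0 = WShi.
  case: (botle xa.1) => [e1|lb].
    by rewrite /T0 -e1 -xaE.
  have l0 : lexW T0 WShi.
    rewrite -FxaShi; apply: Fmono; rewrite xaE; right; split => //.
  exfalso.
  have [d [Shd [T0d [de hd]]]] : exists d, Shi d /\ ~ proj1_sig T0 d /\ ~ R d e /\
      forall z, R d z -> (proj1_sig T0 z <-> Shi z).
    by case: l0 => d [Shd [T0d hd]]; exists d; split => //; split => //; split => //; case: Shd.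
  have lV : forall x' : iseg lexW (W1 e), lexW (Wun T0 (proj1_sig x')) S.
    move=> x'; apply: (lex_trans sR _ hShiS); rewrite /lexW /=.
    apply: lexU_hi; first exact: Plo.
    by exists d.
  pose p' (x' : iseg lexW (W1 e)) := F' (exist (fun u => lexW u S) _ (lV x')).
  have hp' : forall x', (p' x').2 = a /\ isegR (p' x').1 xa.1.
    move=> x'.
    have h1 : prodR (Wlt (W1 e)) (Seg a') (p' x') xa.
      apply/hF; rewrite /p' F'K -/xa; rewrite /isegR /= FxaShi.
      rewrite /lexW /=; apply: lexU_hi; first exact: Plo.
      by exists d.
    have h2 : (bot, a) = p' x' \/ prodR (Wlt (W1 e)) (Seg a') (bot, a) (p' x').
      case: (pselect ((bot, a) = p' x')); first by left.
      move=> ne; right; apply/hF; rewrite /p' F'K /isegR /=.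
      apply: (sub_lex sR (proj2_sig (Wun T0 (proj1_sig x')))); first by move=> z z0; left.
      move=> ee; apply: ne; apply: (can_inj FK); rewrite /p' F'K; apply: sval_inj => /=.
      exact: sval_inj.
    case: h1 => [r1|[e2 r2]]; last by split.
    exfalso; case: h2 => [e3|[r3|[e3 _]]].
    - by move: r1; rewrite -e3 /=; apply: irrA.
    - exact: (irrA _ (trA _ _ _ r3 r1)).
    - by move: r1; rewrite -e3; apply: irrA.
  have gmono : forall u v, isegR u v -> isegR (p' u).1 (p' v).1.
    move=> u v uv.
    have : prodR (Wlt (W1 e)) (Seg a') (p' u) (p' v).
      apply/hF; rewrite /p' !F'K /isegR /lexW /=.
      apply: lexU_lo; [exact: hT0 | exact: Plo | exact: uv].
    case: (hp' u) => e1 _; case: (hp' v) => e2 _.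
    by case=> [|[_ //]]; rewrite e1 e2 => /irrA.
  apply: (@incr_not_lt _ (@isegR _ lexW (W1 e)) (fun x' => (p' x').1) wfP gmono xa.1).
  by case: (hp' xa.1).
have hU : forall x' : iseg lexW (W1 e),
    (forall z, ~ R z e -> (proj1_sig (proj1_sig (F (x', a))) z <-> proj1_sig S z)) /\
    lex R (fun z => proj1_sig (proj1_sig (F (x', a))) z /\ R z e) Slo.
  move=> x'; apply: HL; first exact: (proj2_sig (F (x', a))).
  move=> l3; have l4 : lexW (proj1_sig (F (x', a))) WShi by [].
  case: (botle x') => [e1|lb].
    by move: l4; rewrite e1 -/T0 eT0; apply: lex_irr.
  have l5 : lexW T0 (proj1_sig (F (x', a))) by apply: Fmono; right.
  by move: (lex_trans sR l5 l4); rewrite eT0; apply: lex_irr.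
have lo_fin : forall x' : iseg lexW (W1 e),
    finite_set (fun z => proj1_sig (proj1_sig (F (x', a))) z /\ R z e).
  by move=> x'; apply: sub_finite_set (proj2_sig (proj1_sig (F (x', a)))) => z [].
have lo_lt : forall x' : iseg lexW (W1 e), lexW (exist _ _ (lo_fin x')) (W1 e).
  by move=> x'; rewrite /lexW /= (lex1 sR e (lo_fin x')) => z [].
pose g2 (x' : iseg lexW (W1 e)) : iseg lexW (W1 e) := exist (fun u => lexW u (W1 e)) _ (lo_lt x').
have g2mono : forall u v, isegR u v -> isegR (g2 u) (g2 v).
  move=> u v uv; rewrite /isegR /g2 /lexW /=.
  have : lexW (proj1_sig (F (u, a))) (proj1_sig (F (v, a))) by apply: Fmono; right.
  case=> d [Vd [Ud hd]].
  have de : R d e.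
    apply: contrapT => nd; apply: Ud; apply/((hU u).1 _ nd); apply/((hU v).1 _ nd).
    exact: Vd.
  exists d; split => //; split; first by case.
  by move=> z dz; split; case=> Pz ze; split => //; apply/(hd _ dz).
have lSlo : lexW (exist _ Slo fSlo) (W1 e) by rewrite /lexW /= (lex1 sR e fSlo) => z [].
apply: (@incr_not_lt _ (@isegR _ lexW (W1 e)) g2 wfP g2mono (exist (fun u => lexW u (W1 e)) _ lSlo)).
exact: (hU _).2.
Qed.
End Mult.

Local Open Scope classical_set_scope.

Section Shift.
Variables (K : choiceType) (R : K -> K -> Prop).
Hypothesis sR : sto R.
Variables (eta e : K).
Hypothesis hee : oadd R eta eta e.

Let irr : forall a, ~ R a a. Proof. by case: sR. Qed.
Let tr : forall a b c, R a b -> R b c -> R a c. Proof. by case: sR. Qed.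
Let tot : forall a b, R a b \/ a = b \/ R b a. Proof. by case: sR. Qed.
Let wfR : well_founded R. Proof. by case: sR. Qed.
Let sW := sto_lexW sR.

Notation XW := (XW K).
Notation lexW := (lexW R).
Notation Wlt S := (@isegR XW lexW S).
Notation Seg z := (@isegR K R z).

Lemma shdata_ex : exists fg : (iseg R e -> iseg R eta + iseg R eta) * (iseg R eta + iseg R eta -> iseg R e),
  [/\ cancel fg.1 fg.2, cancel fg.2 fg.1 &
      forall u v, Seg e u v <-> sumR (Seg eta) (Seg eta) (fg.1 u) (fg.1 v)].
Proof. by case: hee => f [[g fK gK] hf]; exists (f, g). Qed.

Definition shdata := proj1_sig (cid shdata_ex).
Let f := shdata.1.
Let f' := shdata.2.
Let fK : cancel f f'. Proof. by rewrite /f /f' /shdata; case: cid => -[? ?] []. Qed.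
Let f'K : cancel f' f. Proof. by rewrite /f /f' /shdata; case: cid => -[? ?] []. Qed.
Let hf : forall u v, Seg e u v <-> sumR (Seg eta) (Seg eta) (f u) (f v).
Proof. by rewrite /f /shdata; case: cid => -[? ?] []. Qed.

Definition sh (k : K) : K :=
  match pselect (R k eta) with left h => proj1_sig (f' (inr (exist _ k h))) | right _ => k end.
Definition unsh (c : K) : K :=
  match pselect (R c e) with
  | left h => match f (exist _ c h) with inl k => proj1_sig k | inr k => proj1_sig k end
  | right _ => c end.

Let hf' : forall u v, sumR (Seg eta) (Seg eta) u v -> R (proj1_sig (f' u)) (proj1_sig (f' v)).
Proof. by move=> u v h; apply/hf; rewrite !f'K. Qed.

Lemma i_id (k : iseg R eta) : proj1_sig (f' (inl k)) = proj1_sig k.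
Proof.
case: k => k hk /=; elim/(well_founded_ind wfR): k hk => k IH hk.
set ik := proj1_sig (f' (inl (exist (fun t => R t eta) k hk))).
have down : forall y, R y ik -> exists k' (hk' : R k' eta), proj1_sig (f' (inl (exist (fun t => R t eta) k' hk'))) = y.
  move=> y yik; have ye : R y e := tr yik (proj2_sig (f' _)).
  have : sumR (Seg eta) (Seg eta) (f (exist (fun t => R t e) y ye)) (inl (exist (fun t => R t eta) k hk)).
    by rewrite -[inl _]f'K; apply/hf.
  case E: (f (exist (fun t => R t e) y ye)) => [k'|k'] //= _.
  exists (proj1_sig k'), (proj2_sig k').
  have -> : exist (fun t => R t eta) (proj1_sig k') (proj2_sig k') = k' by case: (k').
  by rewrite -E fK.
have eqR : forall y, R y k <-> R y ik.
  move=> y; split => yr.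
    have yeta := tr yr hk.
    rewrite -(IH _ yr yeta).
    exact: (@hf' (inl (exist (fun t => R t eta) y yeta)) (inl (exist (fun t => R t eta) k hk)) yr).
  have [k' [hk' e']] := down _ yr.
  have kk : R k' k.
    case: (tot k' k) => [//|[e1|r1]].
      exfalso; move: yr; rewrite -e'; move: hk' {e'}; rewrite e1 => hk'.
      by rewrite (Prop_irrelevance hk' hk) => /irr.
    have := @hf' (inl (exist (fun t => R t eta) k hk)) (inl (exist (fun t => R t eta) k' hk')) r1.
    by rewrite e' => /(tr yr) /irr.
  by rewrite -e' IH.
case: (tot k ik) => [/eqR /irr //|[//|ikk]].
by move: (ikk) => /eqR /irr.
Qed.

Lemma shE k (h : R k eta) : sh k = proj1_sig (f' (inr (exist (fun t => R t eta) k h))).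
Proof. by rewrite /sh; case: pselect => // h'; rewrite (Prop_irrelevance h' h). Qed.

Lemma lo_e k : R k eta -> R k e.
Proof. move=> h; have := i_id (exist (fun t => R t eta) k h) => /= <-; exact: (proj2_sig (f' _)). Qed.

Lemma sh_e k : R k eta -> R (sh k) e.
Proof. by move=> h; rewrite (shE h); exact: (proj2_sig (f' _)). Qed.

Lemma sh_hi k : R k eta -> ~ R (sh k) eta.
Proof.
move=> h; rewrite (shE h) => h2.
have := i_id (exist (fun t => R t eta) _ h2) => /= e1.
have : f' (inr (exist (fun t => R t eta) k h)) = f' (inl (exist (fun t => R t eta) _ h2)).
  by apply: sval_inj; rewrite e1.
by move/(f_equal f); rewrite !f'K.
Qed.

Lemma sh_mono k k' : R k eta -> R k' eta -> R k k' -> R (sh k) (sh k').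
Proof.
move=> h h' kk; rewrite (shE h) (shE h').
exact: (@hf' (inr (exist (fun t => R t eta) k h)) (inr (exist (fun t => R t eta) k' h')) kk).
Qed.

Lemma sh_refl k k' : R k eta -> R k' eta -> R (sh k) (sh k') -> R k k'.
Proof.
move=> h h' s1; case: (tot k k') => [//|[e1|r1]]; first by subst; case: (irr s1).
by case: (irr (tr s1 (sh_mono h' h r1))).
Qed.

Lemma sh_inj k k' : R k eta -> R k' eta -> sh k = sh k' -> k = k'.
Proof.
move=> h h' s1; case: (tot k k') => [r1|[//|r1]].
  by have := sh_mono h h' r1; rewrite s1 => /irr.
by have := sh_mono h' h r1; rewrite s1 => /irr.
Qed.

Lemma unsh_sh k : R k eta -> unsh (sh k) = k.
Proof.
move=> h; rewrite /unsh; case: pselect => [h1|nh]; last by case: nh; apply: sh_e.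
have -> : exist (fun t => R t e) (sh k) h1 = f' (inr (exist (fun t => R t eta) k h)).
  by apply: sval_inj; rewrite /= (shE h).
by rewrite f'K.
Qed.

Lemma sh_unsh c : ~ R c eta -> R c e -> R (unsh c) eta /\ sh (unsh c) = c.
Proof.
move=> nc ce; rewrite /unsh; case: pselect => [h|//].
case E: (f (exist (fun t => R t e) c h)) => [k|k].
  have e1 : f' (inl k) = exist (fun t => R t e) c h by rewrite -E fK.
  have := i_id k; rewrite e1 /= => e2; case: nc; rewrite e2; exact: (proj2_sig k).
split; first exact: (proj2_sig k).
have e1 : f' (inr k) = exist (fun t => R t e) c h by rewrite -E fK.
rewrite (shE (proj2_sig k)).
have -> : exist (fun t => R t eta) (proj1_sig k) (proj2_sig k) = k by case: (k).
by rewrite e1.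
Qed.

Lemma not_lo_e c : R c e -> ~ R c eta -> exists k, R k eta /\ sh k = c.
Proof. by move=> ce nc; have [h1 h2] := sh_unsh nc ce; exists (unsh c). Qed.


Definition ShW (T : XW) : XW := exist _ (sh @` proj1_sig T) (finite_image sh (proj2_sig T)).

Lemma below_sh a k : R a eta -> R k eta -> R a (sh k).
Proof.
move=> ha hk; have := sh_hi hk; case: (tot a (sh k)) => [//|[<- //|r1 n]].
by case: n; apply: tr r1 ha.
Qed.

Lemma lexAB (A A' B B' : set K) : (forall z, A z -> R z eta) -> (forall z, A' z -> R z eta) ->
  (forall z, B z -> R z eta) -> (forall z, B' z -> R z eta) -> lex R B B' ->
  lex R (A `|` sh @` B) (A' `|` sh @` B').
Proof.
move=> hA hA' hB hB' [m [B'm [Bm h]]].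
have meta := hB' _ B'm.
exists (sh m); split; first by right; exists m.
split.
  case=> [/hA /(sh_hi meta) //|[k Bk ek]].
  by have := sh_inj (hB _ Bk) meta ek => km; subst k.
move=> z mz.
have nA : forall X : set K, (forall z, X z -> R z eta) -> ~ X z.
  move=> X hX /hX ze; have := sh_hi meta; apply; exact: tr mz ze.
split.
  case=> [Az|[k Bk ek]]; first by case: (nA _ hA Az).
  subst z; by right; exists k => //; apply: (h k (sh_refl meta (hB _ Bk) mz)).1.
case=> [Az|[k Bk ek]]; first by case: (nA _ hA' Az).
subst z.
by right; exists k => //; apply: (h k (sh_refl meta (hB' _ Bk) mz)).2.
Qed.

Lemma lexAB2 (A A' B : set K) : (forall z, B z -> R z eta) -> (forall z, A' z -> R z eta) ->
  lex R A A' -> lex R (A `|` sh @` B) (A' `|` sh @` B).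
Proof.
move=> hB hA' [m [A'm [Am h]]]; have meta := hA' _ A'm.
exists m; split; first by left.
split; first by case=> // -[k Bk ek]; have := sh_hi (hB _ Bk); rewrite ek.
move=> z mz; split; case=> [/(h _ mz) ?|?]; by [left|right].
Qed.

Lemma prodW (T : XW) : (forall t, proj1_sig T t -> R t eta) ->
  order_iso (prodR (Wlt (W1 eta)) (Wlt T)) (Wlt (ShW T)).
Proof.
move=> hT.
have Xlo : forall (X : iseg lexW (W1 eta)) z, proj1_sig (proj1_sig X) z -> R z eta.
  by move=> [[X fX] lX] z /=; move: lX; rewrite /lexW /= (lex1 sR eta fX); apply.
have Ylo : forall (Y : iseg lexW T) z, proj1_sig (proj1_sig Y) z -> R z eta.
  move=> Y z Yz; exact: (lex_bound sR (proj2_sig Y) hT Yz).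
have Fok : forall (X : iseg lexW (W1 eta)) (Y : iseg lexW T),
    lexW (Wun (proj1_sig X) (ShW (proj1_sig Y))) (ShW T).
  move=> X Y; rewrite /lexW /=.
  have -> : sh @` proj1_sig T = set0 `|` sh @` proj1_sig T by rewrite set0U.
  by apply: lexAB => //; [apply: Xlo|apply: Ylo|exact: (proj2_sig Y)].
pose F (p : iseg lexW (W1 eta) * iseg lexW T) : iseg lexW (ShW T) :=
  exist (fun u => lexW u (ShW T)) _ (Fok p.1 p.2).
have [irrT trT _ _] := sto_iseg (ShW T) sW.
apply: (@oiso_mono _ _ _ _ F) => //.
- apply: prodR_tot => u v.
    by case: (sto_iseg (W1 eta) sW) => _ _ t _; exact: t.
  by case: (sto_iseg T sW) => _ _ t _; exact: t.
- move=> [X Y] [X' Y'] /=; rewrite /prodR /isegR /lexW /F /= => -[lY|[eY lX]].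
    by apply: lexAB => //; [apply: Xlo|apply: Xlo|apply: Ylo|apply: Ylo].
  by rewrite eY; apply: lexAB2 => //; [apply: Ylo|apply: Xlo].
- move=> [V lV].
  have Ve : forall z, proj1_sig V z -> R z e.
    move=> z Vz; apply: (lex_bound sR lV) Vz => g [k Tk <-]; exact: sh_e (hT _ Tk).
  set A := fun z => proj1_sig V z /\ R z eta.
  set B := unsh @` (fun z => proj1_sig V z /\ ~ R z eta).
  have fA : finite_set A by apply: sub_finite_set (proj2_sig V) => z [].
  have fB : finite_set B.
    by apply: finite_image; apply: sub_finite_set (proj2_sig V) => z [].
  have Blo : forall z, B z -> R z eta.
    by move=> z [c [Vc nc] <-]; case: (sh_unsh nc (Ve _ Vc)).
  have lA : lexW (exist _ A fA) (W1 eta) by rewrite /lexW /= (lex1 sR eta fA) => z [].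
  have [m [[k0 Tk0 ek0] [Vm hm]]] := lV.
  have k0eta := hT _ Tk0.
  have lB : lexW (exist _ B fB) T.
    exists k0; split => //; split.
      move=> [c [Vc nc] ec]; apply: Vm; rewrite -ek0 -ec.
      by case: (sh_unsh nc (Ve _ Vc)) => _ ->.
    move=> z k0z; split.
      move=> [c [Vc nc] ec]; have [hz1 hz2] := sh_unsh nc (Ve _ Vc); rewrite ec in hz1 hz2.
      have : (sh @` proj1_sig T) c.
        apply/(hm c) => //; rewrite -ek0 -hz2; exact: sh_mono k0eta hz1 k0z.
      case=> k Tk ek; rewrite -(sh_inj (hT _ Tk) hz1) //; by rewrite ek hz2.
    move=> Tz; have zeta := hT _ Tz.
    have Vz : proj1_sig V (sh z).
      apply/(hm (sh z)); first by rewrite -ek0; exact: sh_mono k0eta zeta k0z.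
      by exists z.
    by exists (sh z); [split => //; exact: sh_hi|exact: unsh_sh].
  exists (exist (fun u => lexW u (W1 eta)) _ lA, exist (fun u => lexW u T) _ lB).
  apply: sval_inj; apply: sval_inj => /=.
  apply/seteqP; split.
    move=> z [[Vz ze]//|[k [c [Vc nc] <-] <-]].
    by case: (sh_unsh nc (Ve _ Vc)) => _ ->.
  move=> z Vz; case: (pselect (R z eta)) => ze; first by left.
  right; exists (unsh z); first by exists z.
  by case: (sh_unsh ze (Ve _ Vz)).
Qed.

End Shift.

Local Open Scope classical_set_scope.
Local Open Scope ring_scope.
Import GRing.Theory.

Lemma fin_pow (T : eqType) (l : seq T) : finite_set [set S : set T | S `<=` [set` l]].
Proof.
elim: l => [|a l IH].
  apply: (sub_finite_set (B := [set set0])); last exact: finite_set1.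
  move=> S /= hS; apply/seteqP; split => // z /hS.
  by rewrite /= in_nil.
apply: (sub_finite_set (B := [set S : set T | S `<=` [set` l]] `|`
   ((fun S => S `|` [set a]) @` [set S : set T | S `<=` [set` l]]))); last first.
  by rewrite finite_setU; split => //; apply: finite_image.
move=> S /= hS.
have h1 : (S `\` [set a]) `<=` [set` l].
  move=> z [Sz nz]; have := hS _ Sz; rewrite /= inE => /orP[/eqP za|//]; by case: nz.
case: (pselect (S a)) => Sa.
  right; exists (S `\` [set a]) => //; apply/seteqP; split.
    by move=> z [[]|->].
  by move=> z Sz; case: (pselect (z = a)) => [->|nz]; [right|left].
left; move=> z Sz; apply: h1; split => // za; apply: Sa; by rewrite -za.
Qed.

Lemma fsum_list (I : choiceType) (A : set I) (r : seq I) (f : I -> int) :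
  A `<=` [set` r] -> uniq r ->
  \sum_(i \in A) f i = \sum_(i <- r) (if `[< A i >] then f i else 0).
Proof.
move=> Ar ur.
rewrite (@eq_fsbigr _ _ _ _ f (fun i => if `[< A i >] then f i else 0)); last first.
  by move=> i; rewrite inE => Ai; rewrite asboolT.
apply: fsbig_fwiden => // i [_ nA] /=; by rewrite asboolF.
Qed.

Lemma sum_one (I : eqType) (r : seq I) (P : I -> Prop) (f : I -> int) i0 :
  uniq r -> i0 \in r -> (forall i, P i <-> i = i0) ->
  \sum_(i <- r) (if `[< P i >] then f i else 0) = f i0.
Proof.
elim: r => [//|a r IH] /= /andP[nar ur] ir hP; rewrite big_cons.
case: (pselect (a = i0)) => [ea|na].
  subst a; rewrite asboolT; last exact/hP.
  rewrite big1_seq ?addr0 // => i /= ir'; rewrite asboolF // => /hP ei; subst i.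
  by rewrite ir' in nar.
rewrite asboolF; last by move/hP.
rewrite add0r IH //; move: ir; rewrite inE => /orP[/eqP e1|//]; by case: na.
Qed.

Lemma sum_zero (I : eqType) (r : seq I) (P : I -> Prop) (f : I -> int) :
  (forall i, i \in r -> P i -> f i = 0) ->
  \sum_(i <- r) (if `[< P i >] then f i else 0) = 0.
Proof.
move=> h; rewrite big1_seq // => i /= ir; case: (pselect (P i)) => Pi.
  by rewrite asboolT // h.
by rewrite asboolF.
Qed.

From mathcomp Require Import finmap.
Local Open Scope classical_set_scope.
Local Open Scope ring_scope.

Section Main.
Variables (K : choiceType) (R : K -> K -> Prop).
Hypothesis sR : sto R.
Hypothesis hcard : forall c, ~ exists f : K -> seg R c, injective f.
Variables (eta : K) (x : K -> K -> int) (y : K -> int).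
Hypothesis hx : forall p, opow2 R eta p -> forall b g, ~ R b p \/ ~ R g p -> x b g = 0.
Hypothesis hy1 : forall a b g, decomp R eta a b g -> y a = x b g.
Hypothesis hy2 : forall a, ~ (exists b g, decomp R eta a b g) -> y a = 0.

Let irr : forall a, ~ R a a. Proof. by case: sR. Qed.
Let tr : forall a b c, R a b -> R b c -> R a c. Proof. by case: sR. Qed.
Let tot : forall a b, R a b \/ a = b \/ R b a. Proof. by case: sR. Qed.
Let sW := sto_lexW sR.

Notation XW := (XW K).
Notation lexW := (lexW R).
Notation Wlt S := (@isegR XW lexW S).
Notation Seg z := (@isegR K R z).
Notation LWz := (LW sR hcard).

Lemma opow_iso p : opow2 R eta p -> order_iso (Seg p) (Wlt (W1 eta)).
Proof. by move=> h; apply: oiso_trans h (finsub_iso sR eta). Qed.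

Lemma opow_uniq p p' : opow2 R eta p -> opow2 R eta p' -> p = p'.
Proof.
move=> h h'; apply: (seg_uniq sR); exact: oiso_trans (opow_iso h) (oiso_sym (opow_iso h')).
Qed.

Lemma Llo p b : opow2 R eta p -> R b p -> forall k, L R b k -> R k eta.
Proof.
move=> hp bp k; have [T [lT hT]] := phi_restr sR (opow_iso hp) bp.
rewrite (L_iso sR hT) => Tk.
by move: lT; rewrite /lexW (lex1 sR eta (proj2_sig T)) => /(_ _ Tk).
Qed.

Lemma LW_lo p b : opow2 R eta p -> R b p -> forall k, proj1_sig (LWz b) k -> R k eta.
Proof. move=> hp bp k; rewrite LW_L; exact: Llo hp bp k. Qed.

Section Alpha.
Variables (alpha xi a' e qq p r s t : K).
Hypotheses (hee : oadd R eta eta e) (hq : opow2 R e qq) (hp : opow2 R eta p) (xip : R xi p).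
Hypotheses (hr : omul R qq a' r) (hs : omul R p xi s) (ht : oadd R r s t) (ha : oadd R t xi alpha).

Notation shh := (sh hee).
Let shhi k : R k eta -> ~ R (shh k) eta := @sh_hi _ _ sR _ _ hee k.

Lemma isoM b : R b p -> order_iso (Seg b) (Wlt (LWz b)) ->
  order_iso (prodR (Seg p) (Seg b)) (Wlt (ShW hee (LWz b))).
Proof.
move=> bp hb; apply: oiso_trans (prodR_iso (opow_iso hp) hb) (prodW sR hee _).
exact: (LW_lo hp bp).
Qed.

Lemma condSG (b g : K) : R b p -> R g p ->
  forall g0 s0, proj1_sig (LWz g) g0 -> proj1_sig (ShW hee (LWz b)) s0 -> R g0 s0.
Proof.
move=> bp gp g0 s0 g0L [k kL <-]; apply: (below_sh sR hee).
  exact: (LW_lo hp gp g0L).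
exact: (LW_lo hp bp kL).
Qed.

Lemma decompL a b g : decomp R eta a b g ->
  [/\ R b p, R g p & L R a = shh @` L R b `|` L R g].
Proof.
move=> [p' [m [hp' bp' gp' hm hma]]].
have ep := opow_uniq hp' hp; subst p'.
split => //.
have isom : order_iso (Seg m) (Wlt (ShW hee (LWz b))).
  exact: oiso_trans hm (isoM bp' (LW_iso sR hcard b)).
have isoa : order_iso (Seg a) (Wlt (Wun (ShW hee (LWz b)) (LWz g))).
  apply: oiso_trans hma _; apply: oiso_trans (sumR_iso isom (LW_iso sR hcard g)) _.
  exact: (@sumW _ _ sR _ _ (Wun _ _) (condSG bp' gp') erefl).
by rewrite (L_iso sR isoa) /= !LW_L.
Qed.

Lemma Lalpha : L R alpha = (L R r `|` shh @` L R xi) `|` L R xi /\ forall c, L R r c -> ~ R c e.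
Proof.
have hre : forall c, proj1_sig (LWz r) c -> ~ R c e.
  apply: (mult sR (a' := a')).
  apply: oiso_trans (oiso_sym (prodR_iso (oiso_trans hq (finsub_iso sR e)) (oiso_refl _))) _.
  exact: oiso_trans (oiso_sym hr) (LW_iso sR hcard r).
have isos : order_iso (Seg s) (Wlt (ShW hee (LWz xi))).
  exact: oiso_trans hs (isoM xip (LW_iso sR hcard xi)).
have isot : order_iso (Seg t) (Wlt (Wun (LWz r) (ShW hee (LWz xi)))).
  apply: oiso_trans ht _; apply: oiso_trans (sumR_iso (LW_iso sR hcard r) isos) _.
  apply: (@sumW _ _ sR _ _ (Wun _ _) _ erefl) => g0 s0 [k kL <-] rs0.
  apply: (hi_lo sR (hre _ rs0)); exact: (sh_e hee (LW_lo hp xip kL)).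
have isoal : order_iso (Seg alpha)
    (Wlt (Wun (Wun (LWz r) (ShW hee (LWz xi))) (LWz xi))).
  apply: oiso_trans ha _; apply: oiso_trans (sumR_iso isot (LW_iso sR hcard xi)) _.
  apply: (@sumW _ _ sR _ _ (Wun _ _) _ erefl) => g0 s0 xg0 [rs0|[k kL <-]].
    apply: (hi_lo sR (hre _ rs0)); apply: (lo_e sR hee); exact: (LW_lo hp xip xg0).
  apply: (below_sh sR hee); [exact: (LW_lo hp xip xg0) | exact: (LW_lo hp xip kL)].
split; first by rewrite (L_iso sR isoal) /= !LW_L.
by move=> c; rewrite -LW_L; apply: hre.
Qed.

Lemma Lxi_sub : L R xi `<=` L R alpha.
Proof. by case: Lalpha => -> _ z xz; right. Qed.

Lemma lo_in_xi k : R k eta -> L R alpha k -> L R xi k.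
Proof.
move=> ke; case: Lalpha => -> hre [[/hre|[k' k'L ek]]|//].
  by case; apply: (lo_e sR hee).
exfalso; move: ke; rewrite -ek; exact: (sh_hi sR (Llo hp xip k'L)).
Qed.

Lemma sub_ex (T : XW) : proj1_sig T `<=` L R alpha -> exists z, L R z = proj1_sig T.
Proof.
move=> hT; case: (pselect (proj1_sig T = L R alpha)) => eT.
  by exists alpha.
have : lexW T (LWz alpha).
  apply: (sub_lex sR (proj2_sig _)); rewrite LW_L //.
move/(phi_down sR (LW_iso sR hcard alpha)) => [z [_ hz]].
by exists z; apply: (L_iso sR hz).
Qed.

Lemma decomp_ex b g : R b p -> R g p -> L R b `<=` L R xi -> L R g `<=` L R xi ->
  exists a, decomp R eta a b g /\ L R a `<=` L R alpha.
Proof.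
move=> bp gp bxi gxi.
set M := ShW hee (LWz b).
set Tt := Wun M (LWz g).
have hM : proj1_sig M `<=` L R alpha.
  move=> z [k kL <-]; case: Lalpha => -> _; left; right; exists k => //.
  by apply: bxi; rewrite -LW_L.
have hTt : proj1_sig Tt `<=` L R alpha.
  move=> z [/hM //|]; rewrite LW_L => /gxi; exact: Lxi_sub.
have [a La] := sub_ex hTt.
have [m Lm] := sub_ex hM.
have eM : M = LWz m by apply: sval_inj; rewrite LW_L Lm.
have eT : Tt = LWz a by apply: sval_inj; rewrite LW_L La.
exists a; split; last by rewrite La.
exists p, m; split => //.
  apply: oiso_trans (LW_iso sR hcard m) _; rewrite -eM.
  exact: oiso_sym (isoM bp (LW_iso sR hcard b)).
apply: oiso_trans (LW_iso sR hcard a) _; rewrite -eT.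
apply: oiso_trans (oiso_sym (@sumW _ _ sR _ _ Tt (condSG bp gp) erefl)) _.
apply: sumR_iso; last exact: oiso_sym (LW_iso sR hcard g).
have hm := oiso_sym (LW_iso sR hcard m); rewrite -eM in hm; exact: hm.
Qed.


Lemma split_eq (A A' B B' : set K) : (forall z, A z -> R z eta) -> (forall z, A' z -> R z eta) ->
  (forall z, B z -> R z eta) -> (forall z, B' z -> R z eta) ->
  shh @` B `|` A = shh @` B' `|` A' -> A = A' /\ B = B'.
Proof.
have side : forall (X X' Y Y' : set K), (forall z, X z -> R z eta) -> (forall z, X' z -> R z eta) ->
    (forall z, Y z -> R z eta) -> (forall z, Y' z -> R z eta) ->
    shh @` Y `|` X = shh @` Y' `|` X' -> X `<=` X' /\ Y `<=` Y'.
  move=> X X' Y Y' hX hX' hY hY' e1; split.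
    move=> z Xz; have : (shh @` Y' `|` X') z by rewrite -e1; right.
    case=> // -[k Yk ek]; have := shhi (hY' _ Yk); rewrite ek => /(_ (hX _ Xz)) [].
  move=> k Yk; have : (shh @` Y' `|` X') (shh k) by rewrite -e1; left; exists k.
  case=> [[k' Y'k' ek]|X'k]; last by case: (shhi (hY _ Yk) (hX' _ X'k)).
  by rewrite -(sh_inj sR (hY' _ Y'k') (hY _ Yk) ek).
move=> hA hA' hB hB' e1.
have [s1 s2] := side _ _ _ _ hA hA' hB hB' e1.
have [s3 s4] := side _ _ _ _ hA' hA hB' hB (esym e1).
by split; apply/seteqP; split.
Qed.

Lemma good : fsum R (wjoin R x) alpha = fsum R y alpha.
Proof.
have [eLa hre] := Lalpha.
rewrite /fsum.
set F := [set b | L R b `<=` L R alpha].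
pose Linv (S : set K) : K :=
  match pselect (exists a, L R a = S) with left h => proj1_sig (cid h) | right _ => alpha end.
have LinvK : forall a, Linv (L R a) = a.
  move=> a; rewrite /Linv; case: pselect => [h|[]]; last by exists a.
  case: cid => c' /= ec'; exact: (L_inj sR hcard ec').
have finF : finite_set F.
  have /finite_seqP [la ela] := L_fin sR hcard alpha.
  apply: (sub_finite_set (B := Linv @` [set S : set K | S `<=` [set` la]])); last first.
    exact: finite_image (fin_pow la).
  move=> a Fa; exists (L R a); last exact: LinvK.
  by rewrite /= -ela.
have finFF : finite_set (F `*` F) by apply: finite_setX.
have inF : forall a, a \in fset_set F -> F a by move=> a; rewrite in_fset_set // => /set_mem.
have inFF : forall q, q \in fset_set (F `*` F) -> F q.1 /\ F q.2.
  by move=> q; rewrite in_fset_set // => /set_mem.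
have memF : forall a, F a -> a \in fset_set F by move=> a Fa; rewrite in_fset_set //; apply/mem_set.
have memFF : forall q, F q.1 -> F q.2 -> q \in fset_set (F `*` F).
  by move=> q F1 F2; rewrite in_fset_set //; apply/mem_set.
have uF : uniq (fset_set F) := fset_uniq _.
have uFF : uniq (fset_set (F `*` F)) := fset_uniq _.
have Lxi_lo : forall k, L R xi k -> R k eta by move=> k kL; exact: (Llo hp xip kL).
have hy' : forall a, F a -> y a = \sum_(q <- fset_set (F `*` F))
    (if `[< decomp R eta a q.1 q.2 >] then x q.1 q.2 else 0).
  move=> a Fa; case: (pselect (exists b g, decomp R eta a b g)) => [[b [g hd]]|nd]; last first.
    by rewrite hy2 // sum_zero // => q _ hd; case: nd; exists q.1, q.2.
  have [bp gp eLa'] := decompL hd.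
  have hbF : F b.
    move=> k Lbk; have : L R alpha (shh k) by apply: Fa; rewrite eLa'; left; exists k.
    have kl := Llo hp bp Lbk.
    rewrite eLa => -[[/hre []|[k' k'L ek]]|/Lxi_lo]; first exact: (sh_e hee kl).
      rewrite -(sh_inj sR (Lxi_lo _ k'L) kl ek).
      by right.
    by move/(shhi kl).
  have hgF : F g by move=> k Lgk; apply: Fa; rewrite eLa'; right.
  rewrite (hy1 hd) (@sum_one _ _ _ _ (b, g)) //; first exact: memFF.
  move=> [b' g'] /=; split; last by case=> -> ->.
  move=> hd'; have [bp' gp' eLa''] := decompL hd'.
  have [e1 e2] : L R g' = L R g /\ L R b' = L R b.
    apply: split_eq; first (by move=> z zz; exact: (Llo hp gp' zz));
      first (by move=> z zz; exact: (Llo hp gp zz)); first (by move=> z zz; exact: (Llo hp bp' zz));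
      first (by move=> z zz; exact: (Llo hp bp zz)).
    by rewrite -eLa'' eLa'.
  by rewrite (L_inj sR hcard e1) (L_inj sR hcard e2).
have hw' : forall e', F e' -> wjoin R x e' = \sum_(q <- fset_set (F `*` F))
    (if `[< L R e' = L R q.1 `|` L R q.2 >] then x q.1 q.2 else 0).
  move=> e' Fe'; rewrite /wjoin (@fsum_list _ _ (fset_set (F `*` F))) //.
  move=> q /= eq; apply: memFF => z hz; apply: Fe'; rewrite eq; by [left|right].
rewrite (fsbig_finite _ _ finF) (fsbig_finite _ _ finF).
rewrite (eq_big_seq _ (fun a ha => hw' a (inF a ha))).
rewrite [RHS](eq_big_seq _ (fun a ha => hy' a (inF a ha))).
rewrite exchange_big [RHS]exchange_big /=.
apply: eq_big_seq => q ql2; have [Fq1 Fq2] := inFF _ ql2.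
case: (pselect (x q.1 q.2 = 0)) => xq.
  by rewrite !sum_zero.
have [q1p q2p] : R q.1 p /\ R q.2 p.
  by split; apply: contrapT => nq; apply: xq; apply: (hx hp); [left|right].
have q1xi : L R q.1 `<=` L R xi by move=> k kL; apply: lo_in_xi (Llo hp q1p kL) (Fq1 _ kL).
have q2xi : L R q.2 `<=` L R xi by move=> k kL; apply: lo_in_xi (Llo hp q2p kL) (Fq2 _ kL).
have [a0 [hd0 La0]] := decomp_ex q1p q2p q1xi q2xi.
have [z0 Lz0] : exists z, L R z = L R q.1 `|` L R q.2.
  have := @sub_ex (Wun (LWz q.1) (LWz q.2)); rewrite /= !LW_L; apply.
  by move=> z [/Fq1|/Fq2].
rewrite (@sum_one _ _ _ _ z0) //; last first.
  move=> e'; split; last by move=> ->.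
  by rewrite -Lz0 => /(L_inj sR hcard).
  by apply: memF; rewrite /F /= Lz0 => k [/Fq1|/Fq2].
rewrite (@sum_one _ _ _ _ a0) //; first exact: memF.
move=> a; split; last by move=> ->.
move=> hd; have [_ _ e1] := decompL hd; have [_ _ e2] := decompL hd0.
by apply: (L_inj sR hcard); rewrite e1 e2.
Qed.

End Alpha.
End Main.

Unset Implicit Arguments.
Theorem mainTheorem5 (K : choiceType) (R : K -> K -> Prop)
    (U : set (set K)) (eta : K) (x : K -> K -> int) (y : K -> int) :
  infinite_cardinal R ->
  superfine R U ->
  (forall p, opow2 R eta p -> forall b g, ~ R b p \/ ~ R g p -> x b g = 0) ->
  (forall a b g, decomp R eta a b g -> y a = x b g) ->
  (forall a, ~ (exists b g, decomp R eta a b g) -> y a = 0) ->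
  ueq U (fsum R (wjoin R x)) (fsum R y).
Proof.
move=> [sR [[f0 _] hcard]] [[_ _ Umono _ _] hsf] hx hy1 hy2.
rewrite /ueq; apply: (Umono (Dset R eta `&` cone R (f0 0%N))); last exact: hsf.
move=> al [[xi [a' [e [q [p [r [s [t [[hee hq hp xip] [hr hs ht ha]]]]]]]]]] _].
exact: (good sR hcard hx hy1 hy2 hee hq hp xip hr hs ht ha).
Qed.
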